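(* Let $S$ be a finite set of polyhedra in $\mathbb{R}^3$ and let $\Pi$ be the (finite) set of planes containing faces of polyhedra in $S$. For each $R\in\Pi$, the lines $R\cap R'$, for $R'\in\Pi$ not parallel to $R$, subdivide $R$; call the connected components of the complement in $R$ of the union of these lines the cells of $R$ (these are open convex subsets of $R$, some bounded and some unbounded). Then there exists $\varepsilon>0$ with the following property. Let $M$ be any finite set of point-plane markers such that each $(p,R)\in M$ has $p$ on a face $F$ of a polyhedron of $S$ with $R$ the plane of $F$, and such that for every face $F$ and every point $x\in F$ there is a marker $(p,R)\in M$ with $p\in F$, $R$ the plane of $F$, and $|x-p|<\varepsilon$. Then the set of planes $\{R:(p,R)\in M\}$ equals $\Pi$, and the union of all faces of all polyhedra of $S$ equals the union of the closures of those bounded cells $C$ of planes $R\in\Pi$ for which there is a marker $(p,R)\in M$ with $p\in C$. In particular the scene is unambiguously reconstructed from the marker data.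
   Context: A polygon is a closed, connected, two-dimensional region of a plane whose boundary consists of finitely many segments (edges) with endpoints (vertices), each vertex being an endpoint of two edges and two edges meeting only in a vertex. A polyhedron is a closed, connected, three-dimensional region of $\mathbb{R}^3$ whose boundary consists of finitely many polygons (faces) such that every edge of every face is shared with exactly one other face, two faces intersect only in shared edges or vertices, and the faces sharing a vertex can be cyclically ordered so that consecutive faces share an edge. Faces are taken to be maximal: the closures of the connected components of the set of points of $\partial P$ having a neighbourhood in $\partial P$ contained in a single plane. A point-plane marker is a pair $(p,R)$ with $R$ a plane in $\mathbb{R}^3$ and $p\in R$. *)

(* Defs.v *)
From Stdlib Require Import Reals List Arith.
Import ListNotations.
Open Scope R_scope.

Definition R3 : Type := (R * R * R)%type.
Definition pset : Type := R3 -> Prop.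

Definition vsub (u v : R3) : R3 :=
  let '(a, b, c) := u in let '(d, e, f) := v in (a - d, b - e, c - f).
Definition vadd (u v : R3) : R3 :=
  let '(a, b, c) := u in let '(d, e, f) := v in (a + d, b + e, c + f).
Definition vscale (t : R) (u : R3) : R3 :=
  let '(a, b, c) := u in (t * a, t * b, t * c).
Definition dot (u v : R3) : R :=
  let '(a, b, c) := u in let '(d, e, f) := v in a * d + b * e + c * f.
Definition vzero : R3 := (0, 0, 0).
Definition norm (u : R3) : R := sqrt (dot u u).
Definition edist (x y : R3) : R := norm (vsub x y).

Definition open_set (A : pset) : Prop :=
  forall x, A x -> exists e, 0 < e /\ forall y, edist x y < e -> A y.
Definition closed_set (A : pset) : Prop := open_set (fun x => ~ A x).
Definition closure (A : pset) : pset :=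
  fun x => forall e, 0 < e -> exists y, A y /\ edist x y < e.
Definition interior (A : pset) : pset :=
  fun x => exists e, 0 < e /\ forall y, edist x y < e -> A y.
Definition boundary (A : pset) : pset :=
  fun x => closure A x /\ ~ interior A x.
Definition subset (A B : pset) : Prop := forall x, A x -> B x.
Definition connected (A : pset) : Prop :=
  forall U V : pset, open_set U -> open_set V ->
    subset A (fun x => U x \/ V x) ->
    (forall x, ~ (A x /\ U x /\ V x)) ->
    (exists x, A x /\ U x) -> (exists x, A x /\ V x) -> False.
Definition component_of (A : pset) (x : R3) : pset :=
  fun y => exists B : pset, connected B /\ subset B A /\ B x /\ B y.
Definition is_component (A C : pset) : Prop :=
  exists x, A x /\ forall y, C y <-> component_of A x y.
Definition bounded_set (A : pset) : Prop :=
  exists B, forall x, A x -> norm x <= B.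

Definition is_plane (P : pset) : Prop :=
  exists n c, n <> vzero /\ forall x, P x <-> dot n x = c.
Definition parallel (P Q : pset) : Prop :=
  exists n c m d k, n <> vzero /\ m <> vzero /\
    (forall x, P x <-> dot n x = c) /\ (forall x, Q x <-> dot m x = d) /\
    m = vscale k n.
Definition plane_of (F P : pset) : Prop := is_plane P /\ subset F P.

Definition edge : Type := (R3 * R3)%type.
Definition seg (e : edge) : pset :=
  fun x => exists t, 0 <= t <= 1 /\ x = vadd (fst e) (vscale t (vsub (snd e) (fst e))).
Definition is_endpoint (e : edge) (v : R3) : Prop := v = fst e \/ v = snd e.
Definition same_edge (e e' : edge) : Prop :=
  (fst e = fst e' /\ snd e = snd e') \/ (fst e = snd e' /\ snd e = fst e').

Definition rel_interior (Pl Q : pset) : pset :=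
  fun x => Q x /\ exists e, 0 < e /\ forall y, Pl y -> edist x y < e -> Q y.

Definition edge_default : edge := (vzero, vzero).

Definition is_polygon_with (Q : pset) (es : list edge) : Prop :=
  exists Pl : pset,
    is_plane Pl /\ subset Q Pl /\
    closed_set Q /\ connected Q /\
    (* two-dimensional region of the plane *)
    (exists x, rel_interior Pl Q x) /\ subset Q (closure (rel_interior Pl Q)) /\
    (forall x, (Q x /\ ~ rel_interior Pl Q x) <-> exists e, In e es /\ seg e x) /\
    (forall e, In e es -> fst e <> snd e) /\
    (forall v, (exists e, In e es /\ is_endpoint e v) ->
       exists i j, (i < length es)%nat /\ (j < length es)%nat /\ i <> j /\
         is_endpoint (nth i es edge_default) v /\ is_endpoint (nth j es edge_default) v /\
         forall k, (k < length es)%nat -> is_endpoint (nth k es edge_default) v ->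
           k = i \/ k = j) /\
    (forall i j x, (i < length es)%nat -> (j < length es)%nat -> i <> j ->
       seg (nth i es edge_default) x -> seg (nth j es edge_default) x ->
       is_endpoint (nth i es edge_default) x /\ is_endpoint (nth j es edge_default) x).

Definition is_polygon (Q : pset) : Prop := exists es, is_polygon_with Q es.

Definition face_default : (pset * list edge) := (fun _ => False, nil).

Definition is_polyhedron (P : pset) : Prop :=
  closed_set P /\ connected P /\
  (* three-dimensional region *)
  (exists x, interior P x) /\ subset P (closure (interior P)) /\
  exists fs : list (pset * list edge),
    let n := length fs in
    let Fc i := fst (nth i fs face_default) in
    let Fe i := snd (nth i fs face_default) in
    let has_edge i e := exists e', In e' (Fe i) /\ same_edge e e' in
    let has_vertex i v := exists e, In e (Fe i) /\ is_endpoint e v in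
    (forall i, (i < n)%nat -> is_polygon_with (Fc i) (Fe i)) /\
    (forall x, boundary P x <-> exists i, (i < n)%nat /\ Fc i x) /\
    (forall i e, (i < n)%nat -> In e (Fe i) ->
       exists j, (j < n)%nat /\ j <> i /\ has_edge j e /\
         forall k, (k < n)%nat -> k <> i -> has_edge k e -> k = j) /\
    (forall i j x, (i < n)%nat -> (j < n)%nat -> i <> j -> Fc i x -> Fc j x ->
       (exists e, In e (Fe i) /\ has_edge j e /\ seg e x) \/
       (has_vertex i x /\ has_vertex j x)) /\
    (* faces sharing a vertex can be cyclically ordered, consecutive ones
       sharing an edge (incident to that vertex) *)
    (forall v, (exists i, (i < n)%nat /\ has_vertex i v) ->
       exists l : list nat, NoDup l /\
         (forall i, In i l <-> ((i < n)%nat /\ has_vertex i v)) /\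
         forall k, (k < length l)%nat ->
           exists e, In e (Fe (nth k l 0%nat)) /\
             has_edge (nth (Nat.modulo (S k) (length l)) l 0%nat) e /\
             is_endpoint e v).

(** Maximal faces of a polyhedron: closures of the connected components of
    the set of boundary points having a neighbourhood in the boundary
    contained in a single plane. *)
Definition flat_point (P : pset) : pset :=
  fun x => boundary P x /\
    exists e, 0 < e /\ exists Pl, is_plane Pl /\
      forall y, boundary P y -> edist x y < e -> Pl y.
Definition is_face (P F : pset) : Prop :=
  exists C, is_component (flat_point P) C /\ forall y, F y <-> closure C y.

Definition face_planes (S : list pset) (Pl : pset) : Prop :=
  is_plane Pl /\ exists P F, In P S /\ is_face P F /\ subset F Pl.

Definition cut_lines (S : list pset) (Pl : pset) : pset :=
  fun y => exists Q, face_planes S Q /\ ~ parallel Pl Q /\ Pl y /\ Q y.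
Definition is_cell (S : list pset) (Pl C : pset) : Prop :=
  is_component (fun y => Pl y /\ ~ cut_lines S Pl y) C.

Definition marker : Type := (R3 * pset)%type.

(* Main.v *)
From Pilot Require Import Defs.
From Stdlib Require Import Reals List Lra Lia Psatz Classical ClassicalEpsilon FunctionalExtensionality PropExtensionality.
Import Pilot.Defs.
Open Scope R_scope.

Definition nsq (u : R3) : R := dot u u.

Ltac vd := repeat match goal with
  | x : R3 |- _ => let a := fresh "a" in let b := fresh "b" in let c := fresh "c" in destruct x as [[a b] c]
  | x : (R * R * R)%type |- _ => let a := fresh "a" in let b := fresh "b" in let c := fresh "c" in destruct x as [[a b] c]
  end.
Ltac vs := unfold nsq, dot, vsub, vadd, vscale, vzero in *; simpl in *.

Lemma nsq_nonneg u : 0 <= nsq u.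
Proof. vd; vs; nra. Qed.

Lemma norm_nonneg u : 0 <= norm u.
Proof. unfold norm; apply sqrt_pos. Qed.

Lemma norm_sq u : norm u * norm u = nsq u.
Proof. unfold norm. apply sqrt_sqrt. apply nsq_nonneg. Qed.

Lemma norm_lt u r : 0 < r -> (norm u < r <-> nsq u < r * r).
Proof.
  intros Hr. split; intro H.
  - pose proof (norm_sq u). pose proof (norm_nonneg u). nra.
  - pose proof (norm_sq u). pose proof (norm_nonneg u).
    destruct (Rlt_le_dec (norm u) r); auto. nra.
Qed.

Lemma norm_le_sq u r : 0 <= r -> nsq u <= r * r -> norm u <= r.
Proof.
  intros Hr H. pose proof (norm_sq u). pose proof (norm_nonneg u).
  destruct (Rle_lt_dec (norm u) r); auto. nra.
Qed.

Lemma cauchy_schwarz u v : dot u v <= norm u * norm v.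
Proof.
  assert (H: (dot u v)*(dot u v) <= nsq u * nsq v).
  { destruct u as [[a1 a2] a3]; destruct v as [[b1 b2] b3]; vs.
    pose proof (Rle_0_sqr (a1*b2-a2*b1)); pose proof (Rle_0_sqr (a1*b3-a3*b1));
    pose proof (Rle_0_sqr (a2*b3-a3*b2)); unfold Rsqr in *; nra. }
  pose proof (norm_sq u). pose proof (norm_sq v).
  pose proof (norm_nonneg u). pose proof (norm_nonneg v).
  destruct (Rle_lt_dec (dot u v) (norm u * norm v)); auto.
  assert (0 <= norm u * norm v) by nra. nra.
Qed.

Lemma nsq_add u v : nsq (vadd u v) = nsq u + 2 * dot u v + nsq v.
Proof. vd; vs; ring. Qed.

Lemma norm_triangle u v : norm (vadd u v) <= norm u + norm v.
Proof.
  apply norm_le_sq. pose proof (norm_nonneg u); pose proof (norm_nonneg v); lra.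
  rewrite nsq_add. pose proof (cauchy_schwarz u v).
  pose proof (norm_sq u). pose proof (norm_sq v). nra.
Qed.

Lemma nsq_scale t u : nsq (vscale t u) = t * t * nsq u.
Proof. vd; vs; ring. Qed.

Lemma norm_scale t u : norm (vscale t u) = Rabs t * norm u.
Proof.
  unfold norm. fold (nsq (vscale t u)). fold (nsq u). rewrite nsq_scale.
  rewrite sqrt_mult_alt. rewrite <- sqrt_Rsqr_abs. unfold Rsqr. reflexivity.
  nra.
Qed.

Lemma edist_sym x y : edist x y = edist y x.
Proof. unfold edist, norm. f_equal. vd; vs; ring. Qed.

Lemma edist_refl x : edist x x = 0.
Proof. unfold edist, norm. replace (dot (vsub x x) (vsub x x)) with 0. apply sqrt_0. vd; vs; ring. Qed.

Lemma edist_nonneg x y : 0 <= edist x y.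
Proof. apply norm_nonneg. Qed.

Lemma edist_tri x y z : edist x z <= edist x y + edist y z.
Proof.
  unfold edist. replace (vsub x z) with (vadd (vsub x y) (vsub y z)).
  apply norm_triangle. vd; vs; f_equal; [f_equal|]; ring.
Qed.

Lemma edist_lt x y r : 0 < r -> (edist x y < r <-> nsq (vsub x y) < r * r).
Proof. intros; apply norm_lt; auto. Qed.

Definition sp (a b : R3) (t : R) : R3 := vadd a (vscale t (vsub b a)).

Lemma sp_dist a b t s : edist (sp a b t) (sp a b s) = Rabs (t - s) * edist a b.
Proof.
  rewrite (edist_sym a b). unfold edist. rewrite <- norm_scale.
  f_equal. unfold sp. vd; vs; f_equal; [f_equal|]; ring.
Qed.

Lemma sp0 a b : sp a b 0 = a.
Proof. unfold sp; vd; vs; f_equal; [f_equal|]; ring. Qed.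
Lemma sp1 a b : sp a b 1 = b.
Proof. unfold sp; vd; vs; f_equal; [f_equal|]; ring. Qed.

Lemma dot_sp n a b t : dot n (sp a b t) = dot n a + t * (dot n b - dot n a).
Proof. unfold sp; vd; vs; ring. Qed.

Lemma dot_sub n x y : dot n (vsub x y) = dot n x - dot n y.
Proof. vd; vs; ring. Qed.

Lemma dot_lip n x y : Rabs (dot n x - dot n y) <= norm n * edist x y.
Proof.
  unfold edist. rewrite <- dot_sub.
  unfold Rabs; destruct (Rcase_abs _).
  - replace (- dot n (vsub x y)) with (dot n (vsub y x)).
    replace (norm (vsub x y)) with (norm (vsub y x)). apply cauchy_schwarz.
    unfold norm; f_equal; vd; vs; ring. vd; vs; ring.
  - apply cauchy_schwarz.
Qed.

Lemma nz_nsq n : n <> vzero -> 0 < nsq n.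
Proof.
  intros H. destruct n as [[a b] c]. vs.
  destruct (Req_dec a 0); destruct (Req_dec b 0); destruct (Req_dec c 0); subst;
  try (exfalso; apply H; reflexivity); nra.
Qed.

Lemma norm_pos n : n <> vzero -> 0 < norm n.
Proof. intros H. unfold norm. apply sqrt_lt_R0. apply nz_nsq; auto. Qed.

Lemma dot_add_scale n w t : dot n (vadd w (vscale t n)) = dot n w + t * nsq n.
Proof. vd; vs; ring. Qed.

Lemma edist_add_scale w t n : edist w (vadd w (vscale t n)) = Rabs t * norm n.
Proof.
  unfold edist. rewrite <- (Rabs_Ropp t).
  rewrite <- norm_scale. f_equal. vd; vs; f_equal; [f_equal|]; ring.
Qed.

Lemma pext (A B : pset) : (forall x, A x <-> B x) -> A = B.
Proof. intros H. apply functional_extensionality; intro x. apply propositional_extensionality; auto. Qed.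

Lemma ball_nbhd x y r : edist x y < r -> exists rho, 0 < rho /\ forall w, edist y w < rho -> edist x w < r.
Proof.
  intros H. exists (r - edist x y). split. lra.
  intros w Hw. pose proof (edist_tri x y w). lra.
Qed.

Lemma closure_mono (A B : pset) x : subset A B -> closure A x -> closure B x.
Proof. intros HS H e He. destruct (H e He) as [y [Hy1 Hy2]]. exists y; auto. Qed.

Lemma closure_self (A : pset) x : A x -> closure A x.
Proof. intros H e He. exists x; split; auto. rewrite edist_refl; auto. Qed.

Lemma closure_idem (A : pset) x : closure (closure A) x -> closure A x.
Proof.
  intros H e He. destruct (H (e/2)) as [y [Hy1 Hy2]]. lra.
  destruct (Hy1 (e/2)) as [z [Hz1 Hz2]]. lra.
  exists z; split; auto. pose proof (edist_tri x y z). lra.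
Qed.

Lemma closed_closure (A : pset) x : closed_set A -> closure A x -> A x.
Proof.
  intros Hc H. apply NNPP; intro Hn. destruct (Hc x Hn) as [e [He Hb]].
  destruct (H e He) as [y [Hy1 Hy2]]. apply (Hb y Hy2); auto.
Qed.

Lemma interior_sub (A : pset) x : interior A x -> A x.
Proof. intros [e [He H]]. apply H. rewrite edist_refl; auto. Qed.

Lemma interior_open (A : pset) y : interior A y -> exists rho, 0 < rho /\ forall w, edist y w < rho -> interior A w.
Proof.
  intros [e [He H]]. exists (e/2). split. lra. intros w Hw.
  exists (e/2). split. lra. intros v Hv. apply H. pose proof (edist_tri y w v). lra.
Qed.

Lemma not_closure (A : pset) x : ~ closure A x -> exists e, 0 < e /\ forall y, A y -> e <= edist x y.
Proof.
  intros H. apply NNPP; intro H2. apply H. intros e He.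
  apply NNPP; intro H3. apply H2. exists e; split; auto. intros y Hy.
  destruct (Rle_lt_dec e (edist x y)); auto. exfalso; apply H3; exists y; auto.
Qed.

Lemma plane_closed (Q : pset) y : is_plane Q -> ~ Q y -> exists rho, 0 < rho /\ forall w, edist y w < rho -> ~ Q w.
Proof.
  intros [n [c [Hn HQ]]] Hy.
  assert (Hd : dot n y <> c) by (intro; apply Hy; apply HQ; auto).
  pose proof (norm_nonneg n).
  exists (Rabs (dot n y - c) / (norm n + 1)). split.
  { apply Rdiv_lt_0_compat. apply Rabs_pos_lt. lra. lra. }
  intros w Hw Qw. apply HQ in Qw.
  pose proof (dot_lip n y w). rewrite Qw in H0.
  assert (norm n * edist y w <= (norm n + 1) * edist y w).
  { pose proof (edist_nonneg y w). nra. }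
  assert ((norm n + 1) * edist y w < Rabs (dot n y - c)).
  { apply (Rmult_lt_compat_l (norm n + 1)) in Hw. 2: lra.
    field_simplify in Hw. lra. lra. }
  lra.
Qed.

Lemma plane_closure (Q : pset) x : is_plane Q -> closure Q x -> Q x.
Proof.
  intros HQ H. apply NNPP; intro Hn. destruct (plane_closed Q x HQ Hn) as [r [Hr Hb]].
  destruct (H r Hr) as [y [Hy1 Hy2]]. apply (Hb y Hy2 Hy1).
Qed.

Lemma fin_min_list {A : Type} (l : list A) (Phi : A -> R -> Prop) :
  (forall a e e', Phi a e -> 0 < e' <= e -> Phi a e') ->
  (forall a, In a l -> exists e, 0 < e /\ Phi a e) ->
  exists e, 0 < e /\ forall a, In a l -> Phi a e.
Proof.
  intros Hm. induction l as [|a l IH]; intros H.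
  - exists 1; split; [lra|]; intros a []. 
  - destruct (H a (or_introl eq_refl)) as [e1 [He1 Ph1]].
    destruct IH as [e2 [He2 Ph2]]. intros b Hb; apply H; right; auto.
    exists (Rmin e1 e2). split. apply Rmin_pos; auto.
    intros b [Hb|Hb].
    + subst. apply (Hm b e1); auto. split. apply Rmin_pos; auto. apply Rmin_l.
    + apply (Hm b e2); auto. split. apply Rmin_pos; auto. apply Rmin_r.
Qed.

Lemma fin_min_nat (n : nat) (Phi : nat -> R -> Prop) :
  (forall a e e', Phi a e -> 0 < e' <= e -> Phi a e') ->
  (forall a, (a < n)%nat -> exists e, 0 < e /\ Phi a e) ->
  exists e, 0 < e /\ forall a, (a < n)%nat -> Phi a e.
Proof.
  intros Hm H. destruct (fin_min_list (seq 0 n) Phi Hm) as [e [He Hp]].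
  - intros a Ha. apply in_seq in Ha. apply H. lia.
  - exists e; split; auto. intros a Ha. apply Hp. apply in_seq. lia.
Qed.

Lemma closure_union {A : Type} (l : list A) (Rf : A -> pset) x :
  closure (fun y => exists a, In a l /\ Rf a y) x -> exists a, In a l /\ closure (Rf a) x.
Proof.
  induction l as [|a l IH]; intros H.
  - destruct (H 1) as [y [[a [[] _]] _]]. lra.
  - destruct (classic (closure (Rf a) x)) as [Hc|Hc].
    + exists a; split; auto. left; auto.
    + destruct (not_closure _ _ Hc) as [e0 [He0 Hb]].
      destruct IH as [b [Hb1 Hb2]].
      * intros e He. destruct (H (Rmin e e0)) as [y [[b [Hb1 Hb2]] Hy]]. apply Rmin_pos; auto.
        destruct Hb1 as [Hb1|Hb1].
        { subst. specialize (Hb y Hb2). pose proof (Rmin_r e e0). lra. }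
        exists y. split. exists b; auto. pose proof (Rmin_l e e0). lra.
      * exists b; split; auto. right; auto.
Qed.

Definition convex (A : pset) : Prop := forall a b t, A a -> A b -> 0 <= t <= 1 -> A (sp a b t).

Lemma convex_connected (A : pset) : convex A -> connected A.
Proof.
  intros Hc U V HU HV Hcov Hdis [a [Aa Ua]] [b [Ab Vb]].
  set (E := fun t => 0 <= t <= 1 /\ forall t', 0 <= t' <= t -> U (sp a b t')).
  assert (HE0 : E 0).
  { split. lra. intros t' Ht'. replace t' with 0 by lra. rewrite sp0; auto. }
  assert (Hb : bound E). { exists 1. intros t [Ht _]. lra. }
  destruct (completeness E Hb (ex_intro _ 0 HE0)) as [T [HT1 HT2]].
  assert (T0 : 0 <= T) by (apply HT1; auto).
  assert (T1 : T <= 1). { apply HT2. intros t [Ht _]. lra. }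
  assert (Hbelow : forall t, 0 <= t < T -> U (sp a b t)).
  { intros t Ht. apply NNPP; intro Hn.
    assert (Hub : is_upper_bound E t).
    { intros s [Hs1 Hs2]. destruct (Rle_lt_dec s t); auto.
      exfalso; apply Hn; apply Hs2; lra. }
    specialize (HT2 t Hub). lra. }
  assert (AT : A (sp a b T)) by (apply Hc; auto).
  pose proof (edist_nonneg a b) as Hab.
  destruct (Hcov _ AT) as [UT|VT].
  - destruct (HU _ UT) as [e [He Hball]].
    assert (T < 1).
    { destruct (Req_dec T 1); try lra. subst. rewrite sp1 in *. exfalso; apply (Hdis b); auto. }
    set (d := Rmin (1 - T) (e / (2 * (edist a b + 1)))).
    assert (Hd : 0 < d). { apply Rmin_pos. lra. apply Rdiv_lt_0_compat; lra. }
    assert (HEd : E (T + d)).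
    { split. pose proof (Rmin_l (1-T) (e / (2 * (edist a b + 1)))). fold d in H0. lra.
      intros t' Ht'. destruct (Rlt_le_dec t' T).
      - apply Hbelow; lra.
      - apply Hball. rewrite sp_dist.
        pose proof (Rmin_r (1-T) (e / (2 * (edist a b + 1)))). fold d in H0.
        rewrite Rabs_left1 by lra.
        assert (- (T - t') <= d) by lra.
        assert (d * edist a b < e).
        { assert (d * (2 * (edist a b + 1)) <= e).
          { apply (Rmult_le_compat_r (2 * (edist a b + 1))) in H0; [|lra].
            field_simplify in H0; lra. }
          nra. }
        nra. }
    specialize (HT1 _ HEd). lra.
  - destruct (HV _ VT) as [e [He Hball]].
    assert (0 < T).
    { destruct (Req_dec T 0); try lra. subst. rewrite sp0 in *. exfalso; apply (Hdis a); auto. }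
    set (d := Rmin T (e / (2 * (edist a b + 1)))).
    assert (Hd : 0 < d). { apply Rmin_pos. lra. apply Rdiv_lt_0_compat; lra. }
    pose proof (Rmin_l T (e / (2 * (edist a b + 1)))). fold d in H0.
    pose proof (Rmin_r T (e / (2 * (edist a b + 1)))). fold d in H1.
    assert (Ut : U (sp a b (T - d/2))) by (apply Hbelow; lra).
    assert (Vt : V (sp a b (T - d/2))).
    { apply Hball. rewrite sp_dist. rewrite Rabs_right by lra.
      assert (d * (2 * (edist a b + 1)) <= e).
      { apply (Rmult_le_compat_r (2 * (edist a b + 1))) in H1; [|lra].
        field_simplify in H1; lra. }
      replace (T - (T - d/2)) with (d/2) by ring. nra. }
    apply (Hdis (sp a b (T - d/2))). split; auto. apply Hc; auto. lra.
Qed.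

Lemma convex_inter (A B : pset) : convex A -> convex B -> convex (fun x => A x /\ B x).
Proof. intros HA HB a b t [Ha1 Ha2] [Hb1 Hb2] Ht; split; auto. Qed.

Lemma convex_ball z r : convex (fun y => edist z y < r).
Proof.
  intros a b t Ha Hb Ht. unfold edist in *.
  replace (vsub z (sp a b t)) with (vadd (vscale (1 - t) (vsub z a)) (vscale t (vsub z b))).
  2:{ unfold sp; vd; vs; f_equal; [f_equal|]; ring. }
  eapply Rle_lt_trans. apply norm_triangle. rewrite !norm_scale.
  rewrite (Rabs_right t) by lra. rewrite (Rabs_right (1-t)) by lra.
  destruct Ht as [Ht1 Ht2].
  assert ((1-t) * norm (vsub z a) <= (1-t) * r) by (apply Rmult_le_compat_l; lra).
  assert (t * norm (vsub z b) <= t * r) by (apply Rmult_le_compat_l; lra).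
  destruct (Req_dec t 0). subst. lra.
  assert (t * norm (vsub z b) < t * r) by (apply Rmult_lt_compat_l; lra). lra.
Qed.

Lemma convex_hyper n c : convex (fun y => dot n y = c).
Proof. intros a b t Ha Hb Ht. rewrite dot_sp. rewrite Ha, Hb. ring. Qed.

Lemma cvx_gt a b c t : a > c -> b > c -> 0 <= t <= 1 -> a + t * (b - a) > c.
Proof. intros. assert (0 <= t * (b - c)) by (apply Rmult_le_pos; lra).
 assert (0 <= (1-t) * (a - c)) by (apply Rmult_le_pos; lra).
 destruct (Req_dec t 1). subst. lra.
 assert (0 < (1-t) * (a - c)) by (apply Rmult_lt_0_compat; lra). lra. Qed.

Lemma convex_gt n c : convex (fun y => dot n y > c).
Proof. intros a b t Ha Hb Ht. rewrite dot_sp. apply cvx_gt; auto. Qed.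

Lemma convex_lt n c : convex (fun y => dot n y < c).
Proof. intros a b t Ha Hb Ht. rewrite dot_sp.
  pose proof (cvx_gt (-dot n a) (-dot n b) (-c) t). lra. Qed.

Lemma convex_plane Q : is_plane Q -> convex Q.
Proof.
  intros [n [c [Hn HQ]]] a b t Ha Hb Ht. apply HQ. apply HQ in Ha. apply HQ in Hb.
  apply (convex_hyper n c); auto.
Qed.

Lemma connected_ext (A B : pset) : (forall x, A x <-> B x) -> connected A -> connected B.
Proof. intros H HA. rewrite <- (pext A B H). auto. Qed.

Lemma union2_connected (A1 A2 : pset) w :
  connected A1 -> connected A2 -> A1 w -> A2 w -> connected (fun x => A1 x \/ A2 x).
Proof.
  intros C1 C2 W1 W2 U V HU HV Hcov Hdis [u [Au Uu]] [v [Av Vv]].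
  assert (Hw : U w \/ V w) by (apply Hcov; auto).
  assert (D1 : forall x, ~ (A1 x /\ U x /\ V x)) by (intros x [H1 H2]; apply (Hdis x); split; auto).
  assert (D2 : forall x, ~ (A2 x /\ U x /\ V x)) by (intros x [H1 H2]; apply (Hdis x); split; auto).
  assert (S1 : subset A1 (fun x => U x \/ V x)) by (intros x Hx; apply Hcov; auto).
  assert (S2 : subset A2 (fun x => U x \/ V x)) by (intros x Hx; apply Hcov; auto).
  destruct Hw as [Uw|Vw].
  - destruct Av as [Av|Av].
    + apply (C1 U V HU HV S1 D1); eauto.
    + apply (C2 U V HU HV S2 D2); eauto.
  - destruct Au as [Au|Au].
    + apply (C1 U V HU HV S1 D1); eauto.
    + apply (C2 U V HU HV S2 D2); eauto.
Qed.

Lemma comp_sub (A : pset) x y : component_of A x y -> A y.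
Proof. intros [B [_ [HB [_ Hy]]]]. auto. Qed.

Lemma comp_connected (A : pset) x : connected (component_of A x).
Proof.
  intros U V HU HV Hcov Hdis [u [Ku Uu]] [v [Kv Vv]].
  assert (Kx : component_of A x x).
  { destruct Ku as [B [CB [SB [Bx By]]]]. exists B; auto. }
  assert (Hsub : forall B y, connected B -> subset B A -> B x -> B y -> subset B (component_of A x)).
  { intros B y CB SB Bx By z Bz. exists B; auto. }
  destruct (Hcov x Kx) as [Ux|Vx].
  - destruct Kv as [B [CB [SB [Bx Bv]]]].
    apply (CB U V HU HV).
    + intros z Bz; apply Hcov. eapply Hsub; eauto.
    + intros z [Bz Hz]. apply (Hdis z). split; auto. eapply Hsub; eauto.
    + exists x; auto.
    + exists v; auto.
  - destruct Ku as [B [CB [SB [Bx Bu]]]].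
    apply (CB U V HU HV).
    + intros z Bz; apply Hcov. eapply Hsub; eauto.
    + intros z [Bz Hz]. apply (Hdis z). split; auto. eapply Hsub; eauto.
    + exists u; auto.
    + exists x; auto.
Qed.

Lemma comp_absorb (A B : pset) x w :
  connected B -> subset B A -> B w -> component_of A x w -> subset B (component_of A x).
Proof.
  intros CB SB Bw [B' [CB' [SB' [Bx' Bw']]]] y By.
  exists (fun z => B' z \/ B z). split. eapply union2_connected; eauto.
  split. intros z [Hz|Hz]; auto. split; auto.
Qed.

Lemma comp_self (A : pset) x : A x -> component_of A x x.
Proof.
  intros Ax. exists (fun y => y = x). split.
  - intros U V HU HV Hcov Hdis [u [Hu Uu]] [v [Hv Vv]]. subst. apply (Hdis x); auto.
  - split. intros y Hy; subst; auto. split; auto.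
Qed.

Lemma dot_add_sc n z t w : dot n (vadd z (vscale t w)) = dot n z + t * dot n w.
Proof. vd; vs; ring. Qed.

Lemma edist_add_sc z t w : edist z (vadd z (vscale t w)) = Rabs t * norm w.
Proof.
  unfold edist. rewrite <- (Rabs_Ropp t). rewrite <- norm_scale. f_equal. vd; vs; f_equal; [f_equal|]; ring.
Qed.

Lemma small_step z w r : 0 < r -> exists t, 0 < t /\ edist z (vadd z (vscale t w)) < r.
Proof.
  intros Hr. pose proof (norm_nonneg w).
  exists (r / (2 * (norm w + 1))). split. apply Rdiv_lt_0_compat; lra.
  rewrite edist_add_sc. rewrite Rabs_right.
  2:{ left; apply Rdiv_lt_0_compat; lra. }
  apply (Rmult_lt_reg_r (2 * (norm w + 1))). lra.
  field_simplify; [|lra]. nra.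
Qed.

Lemma plane_nonempty Q : is_plane Q -> exists z, Q z.
Proof.
  intros [n [c [Hn HQ]]]. pose proof (nz_nsq n Hn).
  exists (vscale (c / nsq n) n). apply HQ.
  unfold nsq in *. vd; vs. field. lra.
Qed.

Lemma perp_rel (n m : R3) :
  (forall w, dot n w = 0 -> dot m w = 0) ->
  forall z y, (dot m y - dot m z) * nsq n = dot m n * (dot n y - dot n z).
Proof.
  intros H z y. destruct n as [[n1 n2] n3]. destruct m as [[m1 m2] m3].
  pose proof (H ((n2, -n1), 0)) as H1. pose proof (H ((n3, 0), -n1)) as H2.
  pose proof (H ((0, n3), -n2)) as H3. vs.
  assert (E1 : m1 * n2 - m2 * n1 = 0). { rewrite <- H1. ring. ring. }
  assert (E2 : m1 * n3 - m3 * n1 = 0). { rewrite <- H2. ring. ring. }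
  assert (E3 : m2 * n3 - m3 * n2 = 0). { rewrite <- H3. ring. ring. }
  vd; vs.
  assert (F1 : m1 * (n1*n1+n2*n2+n3*n3) = n1 * (m1*n1+m2*n2+m3*n3)).
  { assert (m1 * (n1*n1+n2*n2+n3*n3) - n1 * (m1*n1+m2*n2+m3*n3) = n2*(m1*n2 - m2*n1) + n3*(m1*n3-m3*n1)) by ring.
    rewrite E1, E2 in H0. lra. }
  assert (F2 : m2 * (n1*n1+n2*n2+n3*n3) = n2 * (m1*n1+m2*n2+m3*n3)).
  { assert (m2 * (n1*n1+n2*n2+n3*n3) - n2 * (m1*n1+m2*n2+m3*n3) = - n1*(m1*n2 - m2*n1) + n3*(m2*n3-m3*n2)) by ring.
    rewrite E1, E3 in H0. lra. }
  assert (F3 : m3 * (n1*n1+n2*n2+n3*n3) = n3 * (m1*n1+m2*n2+m3*n3)).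
  { assert (m3 * (n1*n1+n2*n2+n3*n3) - n3 * (m1*n1+m2*n2+m3*n3) = - n1*(m1*n3 - m3*n1) - n2*(m2*n3-m3*n2)) by ring.
    rewrite E2, E3 in H0. lra. }
  transitivity ((m1 * (n1*n1+n2*n2+n3*n3)) * (a - a0) + (m2 * (n1*n1+n2*n2+n3*n3)) * (b - b0) + (m3 * (n1*n1+n2*n2+n3*n3)) * (c - c0)).
  ring. rewrite F1, F2, F3. ring.
Qed.

Lemma perp_nz (n m : R3) : n <> vzero -> m <> vzero ->
  (forall w, dot n w = 0 -> dot m w = 0) -> dot m n <> 0.
Proof.
  intros Hn Hm H E. pose proof (nz_nsq n Hn) as Pn.
  apply Hm.
  assert (forall y, dot m y * nsq n = dot m n * dot n y).
  { intro y. pose proof (perp_rel n m H vzero y). vs. destruct m as [[m1 m2] m3]; destruct n as [[n1 n2] n3]; destruct y as [[y1 y2] y3]; simpl in *. lra. }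
  rewrite E in H0. destruct m as [[m1 m2] m3].
  pose proof (H0 ((1,0),0)). pose proof (H0 ((0,1),0)). pose proof (H0 ((0,0),1)).
  vs. unfold nsq in Pn.
  assert (m1 = 0) by nra. assert (m2 = 0) by nra. assert (m3 = 0) by nra. subst. reflexivity.
Qed.

Lemma disk_lemma (Pl Q : pset) z r :
  is_plane Pl -> is_plane Q -> Pl z -> 0 < r ->
  (forall y, Pl y -> edist z y < r -> Q y) -> forall y, Pl y <-> Q y.
Proof.
  intros [n [c [Hn HP]]] [m [d [Hm HQ]]] Pz Hr H.
  assert (Qz : Q z). { apply H; auto. rewrite edist_refl; auto. }
  apply HP in Pz. apply HQ in Qz.
  assert (Hperp : forall w, dot n w = 0 -> dot m w = 0).
  { intros w Hw. destruct (small_step z w r Hr) as [t [Ht Hd]].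
    assert (Pl (vadd z (vscale t w))). { apply HP. rewrite dot_add_sc. rewrite Hw, Pz. ring. }
    specialize (H _ H0 Hd). apply HQ in H. rewrite dot_add_sc in H.
    rewrite Qz in H. assert (t * dot m w = 0) by lra.
    apply Rmult_integral in H1. destruct H1; auto. lra. }
  pose proof (perp_nz n m Hn Hm Hperp) as Hmn. pose proof (nz_nsq n Hn) as Pn.
  intro y. rewrite HP, HQ. pose proof (perp_rel n m Hperp z y).
  rewrite Pz, Qz in H0. split; intro E.
  - rewrite E in H0. replace (c - c) with 0 in H0 by ring.
    rewrite Rmult_0_r in H0. apply Rmult_integral in H0. destruct H0; lra.
  - rewrite E in H0. replace (d - d) with 0 in H0 by ring. rewrite Rmult_0_l in H0.
    symmetry in H0. apply Rmult_integral in H0. destruct H0; lra.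
Qed.

Lemma plane_subset_eq (Pl Q : pset) : is_plane Pl -> is_plane Q ->
  (forall x, Pl x -> Q x) -> forall y, Pl y <-> Q y.
Proof.
  intros HP HQ H. destruct (plane_nonempty Pl HP) as [z Hz].
  apply (disk_lemma Pl Q z 1); auto. lra.
Qed.

Lemma parallel_refl Pl : is_plane Pl -> parallel Pl Pl.
Proof.
  intros [n [c [Hn HP]]]. exists n, c, n, c, 1. do 4 (split; [auto|]).
  vd; vs; f_equal; [f_equal|]; ring.
Qed.

Lemma parallel_common Pl Q y : parallel Pl Q -> Pl y -> Q y -> forall x, Pl x <-> Q x.
Proof.
  intros [n [c [m [d [k [Hn [Hm [HP [HQ Hk]]]]]]]]] Py Qy x.
  apply HP in Py; apply HQ in Qy. rewrite HP, HQ. subst m.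
  assert (k <> 0). { intro; subst. apply Hm. vs; vd; vs. f_equal; [f_equal|]; ring. }
  assert (forall v, dot (vscale k n) v = k * dot n v) by (intros; vd; vs; ring).
  rewrite H0 in *. split; intro E.
  - rewrite E, <- Qy, Py. auto.
  - rewrite <- Qy in E. apply Rmult_eq_reg_l in E; auto. rewrite E; auto.
Qed.

Lemma plane_rep_ne (Pl : pset) n c :
  is_plane Pl -> n <> vzero -> ~ (forall x, Pl x -> dot n x = c) -> exists q, Pl q /\ dot n q <> c.
Proof.
  intros HP Hn H. apply NNPP; intro H2. apply H. intros x Px.
  apply NNPP; intro H3. apply H2. exists x; auto.
Qed.

Lemma push z w e eps v : edist z w < e -> 0 < eps ->
  exists t, 0 < t /\ edist z (vadd w (vscale t v)) < e /\ edist w (vadd w (vscale t v)) < eps.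
Proof.
  intros H He. destruct (small_step w v (Rmin eps (e - edist z w))) as [t [Ht Hd]].
  apply Rmin_pos; lra.
  exists t. pose proof (Rmin_l eps (e - edist z w)). pose proof (Rmin_r eps (e - edist z w)).
  pose proof (edist_tri z w (vadd w (vscale t v))). split; auto. split; lra.
Qed.

Lemma nonbd_class (P : pset) y : closed_set P -> ~ boundary P y -> interior P y \/ ~ P y.
Proof.
  intros Hc Hb. destruct (classic (P y)) as [Py|Py]; auto. left.
  apply NNPP; intro Hi. apply Hb. split; auto. apply closure_self; auto.
Qed.

Lemma bd_in (P : pset) z : closed_set P -> boundary P z -> P z.
Proof. intros Hc [H _]. apply closed_closure; auto. Qed.

Lemma conn_side (H U V : pset) : connected H -> open_set U -> open_set V ->
  subset H (fun x => U x \/ V x) -> (forall x, ~ (H x /\ U x /\ V x)) ->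
  (exists a, H a /\ U a) -> forall b, H b -> U b.
Proof.
  intros C HU HV Hcov Hdis Ha b Hb. destruct (Hcov b Hb) as [Ub|Vb]; auto.
  exfalso. apply (C U V HU HV Hcov Hdis Ha). exists b; auto.
Qed.

Lemma interior_is_open (P : pset) : open_set (interior P).
Proof. intros x Hx. apply interior_open; auto. Qed.

Lemma hard_lemma (P Q : pset) z e :
  closed_set P -> subset P (closure (interior P)) -> boundary P z -> is_plane Q -> 0 < e ->
  (forall b, boundary P b -> edist z b < e -> Q b) ->
  forall y, Q y -> edist z y < e -> boundary P y.
Proof.
  intros Hc Hci Hz HQ He Hfl y0 Qy0 Hy0.
  apply NNPP; intro Hnb.
  pose proof HQ as HQ'. destruct HQ' as [n [c [Hn HQe]]].
  pose proof (nz_nsq n Hn) as Pn.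
  set (Hp := fun y => edist z y < e /\ dot n y > c).
  set (Hm := fun y => edist z y < e /\ dot n y < c).
  set (U := interior P). set (V := fun w => ~ P w).
  assert (OU : open_set U) by apply interior_is_open.
  assert (OV : open_set V) by exact Hc.
  assert (Cp : connected Hp) by (apply convex_connected, convex_inter; [apply convex_ball|apply convex_gt]).
  assert (Cm : connected Hm) by (apply convex_connected, convex_inter; [apply convex_ball|apply convex_lt]).
  assert (NBp : forall y, Hp y -> ~ boundary P y).
  { intros y [H1 H2] Hb. specialize (Hfl y Hb H1). apply HQe in Hfl. lra. }
  assert (NBm : forall y, Hm y -> ~ boundary P y).
  { intros y [H1 H2] Hb. specialize (Hfl y Hb H1). apply HQe in Hfl. lra. }
  assert (Dis : forall (H : pset) x, ~ (H x /\ U x /\ V x)).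
  { intros H x [_ [Ux Vx]]. apply Vx. apply interior_sub; auto. }
  assert (Covp : subset Hp (fun x => U x \/ V x)).
  { intros x Hx. apply nonbd_class; auto. }
  assert (Covm : subset Hm (fun x => U x \/ V x)).
  { intros x Hx. apply nonbd_class; auto. }
  assert (Covp' : subset Hp (fun x => V x \/ U x)).
  { intros x Hx. destruct (Covp x Hx); auto. }
  assert (Covm' : subset Hm (fun x => V x \/ U x)).
  { intros x Hx. destruct (Covm x Hx); auto. }
  assert (Dis' : forall (H : pset) x, ~ (H x /\ V x /\ U x)).
  { intros H x [_ [Vx Ux]]. apply Vx. apply interior_sub; auto. }
  assert (Qy0' : dot n y0 = c) by (apply HQe; auto).
  assert (Dm : forall w t, dot n (vadd w (vscale t (vscale (-1) n))) = dot n w - t * nsq n).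
  { intros; vd; vs; ring. }
  assert (Dp : forall w t, dot n (vadd w (vscale t n)) = dot n w + t * nsq n).
  { intros; rewrite dot_add_sc; unfold nsq; ring. }
  destruct (nonbd_class P y0 Hc Hnb) as [Iy|Ny].
  - destruct (interior_open P y0 Iy) as [r [Hr Hball]].
    destruct (push z y0 e r n Hy0 Hr) as [t1 [Ht1 [Ha1 Hb1]]].
    destruct (push z y0 e r (vscale (-1) n) Hy0 Hr) as [t2 [Ht2 [Ha2 Hb2]]].
    assert (AUp : forall b, Hp b -> U b).
    { apply (conn_side Hp U V Cp OU OV Covp (Dis Hp)). exists (vadd y0 (vscale t1 n)).
      split. split; auto. rewrite Dp. nra. apply Hball; auto. }
    assert (AUm : forall b, Hm b -> U b).
    { apply (conn_side Hm U V Cm OU OV Covm (Dis Hm)). exists (vadd y0 (vscale t2 (vscale (-1) n))).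
      split. split; auto. rewrite Dm. nra. apply Hball; auto. }
    apply (proj2 Hz). exists e. split; auto. intros w Hw.
    destruct (Rtotal_order (dot n w) c) as [Hl|[He2|Hg]].
    + apply interior_sub. apply AUm. split; auto.
    + apply NNPP; intro Nw. destruct (Hc w Nw) as [r2 [Hr2 Hb2']].
      destruct (push z w e r2 n Hw Hr2) as [t3 [Ht3 [Ha3 Hb3]]].
      apply (Hb2' _ Hb3). apply interior_sub. apply AUp. split; auto. rewrite Dp. nra.
    + apply interior_sub. apply AUp. split; auto.
  - destruct (Hc y0 Ny) as [r [Hr Hball]].
    destruct (push z y0 e r n Hy0 Hr) as [t1 [Ht1 [Ha1 Hb1]]].
    destruct (push z y0 e r (vscale (-1) n) Hy0 Hr) as [t2 [Ht2 [Ha2 Hb2]]].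
    assert (AVp : forall b, Hp b -> V b).
    { apply (conn_side Hp V U Cp OV OU Covp' (Dis' Hp)). exists (vadd y0 (vscale t1 n)).
      split. split; auto. rewrite Dp. nra. apply Hball; auto. }
    assert (AVm : forall b, Hm b -> V b).
    { apply (conn_side Hm V U Cm OV OU Covm' (Dis' Hm)). exists (vadd y0 (vscale t2 (vscale (-1) n))).
      split. split; auto. rewrite Dm. nra. apply Hball; auto. }
    assert (Pz : P z) by (apply bd_in; auto).
    destruct (Hci z Pz e He) as [w [Iw Hw]].
    destruct (interior_open P w Iw) as [r2 [Hr2 Hb2']].
    destruct (push z w e r2 n Hw Hr2) as [t3 [Ht3 [Ha3 Hb3]]].
    destruct (Rtotal_order (dot n w) c) as [Hl|[He2|Hg]].
    + apply (AVm w). split; auto. apply interior_sub; auto.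
    + apply (AVp (vadd w (vscale t3 n))). split; auto. rewrite Dp. nra.
      apply interior_sub; auto.
    + apply (AVp w). split; auto. apply interior_sub; auto.
Qed.

Definition PH (P : pset) : Prop := closed_set P /\ subset P (closure (interior P)).

Lemma face_unfold P F : is_face P F ->
  exists x0, flat_point P x0 /\ F = closure (component_of (flat_point P) x0).
Proof.
  intros [C [[x0 [Hx0 HC]] HF]]. exists x0. split; auto.
  apply pext. intro y. rewrite HF. rewrite (pext C _ HC). tauto.
Qed.

Lemma flat_bd P x : flat_point P x -> boundary P x.
Proof. intros [H _]; auto. Qed.

Lemma flat_plane_self P z e Pz : boundary P z -> 0 < e ->
  (forall b, boundary P b -> edist z b < e -> Pz b) -> Pz z.
Proof. intros Hb He H. apply H; auto. rewrite edist_refl; auto. Qed.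

Lemma disk_flat P z e Pz : PH P -> boundary P z -> is_plane Pz -> 0 < e ->
  (forall b, boundary P b -> edist z b < e -> Pz b) ->
  connected (fun y => Pz y /\ edist z y < e/2) /\
  subset (fun y => Pz y /\ edist z y < e/2) (flat_point P) /\
  (forall y, Pz y -> edist z y < e -> boundary P y).
Proof.
  intros [Hc Hci] Hz HP He Hfl.
  assert (HB : forall y, Pz y -> edist z y < e -> boundary P y).
  { intros. eapply hard_lemma; eauto. }
  split. apply convex_connected, convex_inter. apply convex_plane; auto. apply convex_ball.
  split; auto.
  intros y [Py Hy]. split. apply HB; auto; lra.
  exists (e/2). split. lra. exists Pz. split; auto.
  intros b Hb Hyb. apply Hfl; auto. pose proof (edist_tri z y b). lra.
Qed.

Lemma flat_disk_comp P x0 y e Py c : PH P -> boundary P y -> is_plane Py -> 0 < e ->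
  (forall b, boundary P b -> edist y b < e -> Py b) ->
  component_of (flat_point P) x0 c -> edist y c < e/2 ->
  forall w, Py w -> edist y w < e/2 -> component_of (flat_point P) x0 w.
Proof.
  intros HPH Hy HP He Hfl Kc Hyc.
  destruct (disk_flat P y e Py HPH Hy HP He Hfl) as [Cd [Sd _]].
  intros w Pw Hw.
  apply (comp_absorb (flat_point P) (fun y0 => Py y0 /\ edist y y0 < e/2) x0 c); auto.
  split; auto. apply Hfl. apply flat_bd. eapply comp_sub; eauto. lra.
Qed.

Lemma comp_disk P x0 Pl z : PH P -> is_plane Pl ->
  subset (closure (component_of (flat_point P) x0)) Pl ->
  component_of (flat_point P) x0 z ->
  exists rho, 0 < rho /\ forall y, Pl y -> edist z y < rho -> component_of (flat_point P) x0 y.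
Proof.
  intros HPH HPl Hsub Kz.
  assert (Fz : flat_point P z) by (eapply comp_sub; eauto).
  destruct Fz as [Bz [e [He [Pz [HPz Hfl]]]]].
  assert (Hd : forall w, Pz w -> edist z w < e/2 -> component_of (flat_point P) x0 w).
  { apply (flat_disk_comp P x0 z e Pz z); auto. rewrite edist_refl; lra. }
  assert (Pzz : Pz z) by (eapply flat_plane_self; eauto).
  assert (Heq : forall y, Pz y <-> Pl y).
  { apply (disk_lemma Pz Pl z (e/2)); auto. lra.
    intros y Py Hy. apply Hsub. apply closure_self. apply Hd; auto. }
  exists (e/2). split. lra. intros y Py Hy. apply Hd; auto. apply Heq; auto.
Qed.

Lemma face_disk P F : PH P -> is_face P F ->
  exists z Pz rho, is_plane Pz /\ 0 < rho /\ Pz z /\ forall y, Pz y -> edist z y < rho -> F y.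
Proof.
  intros HPH HF. destruct (face_unfold P F HF) as [x0 [Fx0 ->]].
  pose proof Fx0 as [Bx [e [He [Px [HPx Hfl]]]]].
  exists x0, Px, (e/2). split; auto. split. lra. split. eapply flat_plane_self; eauto.
  intros y Py Hy. apply closure_self.
  apply (flat_disk_comp P x0 x0 e Px x0); auto. apply comp_self; auto.
  rewrite edist_refl; lra.
Qed.

Lemma face_plane_unique P F Q1 Q2 : PH P -> is_face P F -> plane_of F Q1 -> plane_of F Q2 -> Q1 = Q2.
Proof.
  intros HPH HF [H1 S1] [H2 S2].
  destruct (face_disk P F HPH HF) as [z [Pz [rho [HPz [Hr [Pzz Hd]]]]]].
  assert (E1 : forall y, Pz y <-> Q1 y).
  { apply (disk_lemma Pz Q1 z rho); auto. }
  assert (E2 : forall y, Pz y <-> Q2 y).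
  { apply (disk_lemma Pz Q2 z rho); auto. }
  apply pext. intro y. rewrite <- E1, <- E2. tauto.
Qed.

Lemma face_nonempty P F : is_face P F -> exists x, F x.
Proof.
  intros HF. destruct (face_unfold P F HF) as [x0 [Fx0 ->]]. exists x0.
  apply closure_self. apply comp_self; auto.
Qed.

Lemma bd_closed P x : closure (boundary P) x -> boundary P x.
Proof.
  intros H. split.
  - apply closure_idem. eapply closure_mono; [|exact H]. intros y [Hy _]; auto.
  - intros Hi. destruct (interior_open P x Hi) as [r [Hr Hb]].
    destruct (H r Hr) as [y [[_ Hy] Hd]]. apply Hy. apply Hb; auto.
Qed.

Lemma face_in_bd P F x : is_face P F -> F x -> boundary P x.
Proof.
  intros HF Fx. destruct (face_unfold P F HF) as [x0 [Fx0 ->]].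
  apply bd_closed. eapply closure_mono; [|exact Fx].
  intros y Ky. apply flat_bd. eapply comp_sub; eauto.
Qed.

Lemma comp_in_plane P w e Pi : PH P -> flat_point P w -> is_plane Pi -> 0 < e ->
  (forall b, boundary P b -> edist w b < e -> Pi b) ->
  forall k, component_of (flat_point P) w k -> Pi k.
Proof.
  intros HPH Fw HPi He Hw.
  pose proof HPH as [Hc Hci].
  set (U := fun u => exists eps, 0 < eps /\ forall b, boundary P b -> edist u b < eps -> Pi b).
  set (V := fun u => exists eps, 0 < eps /\ exists Q, is_plane Q /\ (exists q, Q q /\ ~ Pi q) /\
                 forall b, boundary P b -> edist u b < eps -> Q b).
  set (K := component_of (flat_point P) w).
  assert (OU : open_set U).
  { intros u [eps [Heps H]]. exists (eps/2). split. lra. intros u' Hu'.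
    exists (eps/2). split. lra. intros b Hb Hd. apply H; auto. pose proof (edist_tri u u' b). lra. }
  assert (OV : open_set V).
  { intros u [eps [Heps H]]. exists (eps/2). split. lra. intros u' Hu'.
    exists (eps/2). split. lra. destruct H as [Q [HQ [Hq H]]]. exists Q. split; auto. split; auto.
    intros b Hb Hd. apply H; auto. pose proof (edist_tri u u' b). lra. }
  assert (Cov : subset K (fun x => U x \/ V x)).
  { intros k Kk. assert (Fk : flat_point P k) by (eapply comp_sub; eauto).
    destruct Fk as [Bk [eps [Heps [Pk [HPk Hk]]]]].
    destruct (classic (forall x, Pk x -> Pi x)) as [Hs|Hs].
    - left. exists eps. split; auto.
    - right. exists eps. split; auto. exists Pk. split; auto. split; auto.
      apply NNPP; intro Hn. apply Hs. intros x Px. apply NNPP; intro Hx. apply Hn. exists x; auto. }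
  assert (Dis : forall x, ~ (K x /\ U x /\ V x)).
  { intros k [Kk [[e1 [He1 H1]] [e2 [He2 [Q [HQ [[q [Qq Nq]] H2]]]]]]].
    assert (Bk : boundary P k) by (apply flat_bd; eapply comp_sub; eauto).
    assert (HB : forall y, Q y -> edist k y < e2 -> boundary P y).
    { intros. eapply hard_lemma; eauto. }
    assert (Qk : Q k) by (eapply flat_plane_self; eauto).
    assert (E : forall y, Q y <-> Pi y).
    { apply (disk_lemma Q Pi k (Rmin e1 e2)); auto. apply Rmin_pos; auto.
      intros y Qy Hy. pose proof (Rmin_l e1 e2). pose proof (Rmin_r e1 e2).
      apply H1. apply HB; auto. lra. lra. }
    apply Nq. apply E; auto. }
  assert (Kw : K w) by (apply comp_self; auto).
  intros k Kk.
  assert (Uk : U k).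
  { apply (conn_side K U V (comp_connected _ _) OU OV Cov Dis); auto.
    exists w. split; auto. exists e; auto. }
  destruct Uk as [eps [Heps H]]. apply H. apply flat_bd; eapply comp_sub; eauto.
  rewrite edist_refl; auto.
Qed.

Definition polyprop (Q : pset) (es : list edge) (Pl : pset) : Prop :=
  is_plane Pl /\ subset Q Pl /\ closed_set Q /\ (exists w, rel_interior Pl Q w) /\
  (forall x, (Q x /\ ~ rel_interior Pl Q x) <-> exists e, In e es /\ seg e x).

Lemma polygon_prop Q es : is_polygon_with Q es -> exists Pl, polyprop Q es Pl.
Proof.
  intros [Pl [H1 [H2 [H3 [H4 [H5 [H6 [H7 _]]]]]]]]. exists Pl. repeat split; auto; apply H7; auto.
Qed.

Definition Fcf (fs : list (pset * list edge)) i := fst (nth i fs face_default).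
Definition Fef (fs : list (pset * list edge)) i := snd (nth i fs face_default).

Definition PD (P : pset) (fs : list (pset * list edge)) : Prop :=
  (forall i, (i < length fs)%nat -> is_polygon_with (Fcf fs i) (Fef fs i)) /\
  (forall x, boundary P x <-> exists i, (i < length fs)%nat /\ Fcf fs i x) /\
  (forall i j x, (i < length fs)%nat -> (j < length fs)%nat -> i <> j -> Fcf fs i x -> Fcf fs j x ->
       (exists e, In e (Fef fs i) /\ (exists e', In e' (Fef fs j) /\ same_edge e e') /\ seg e x) \/
       ((exists e, In e (Fef fs i) /\ is_endpoint e x) /\ (exists e, In e (Fef fs j) /\ is_endpoint e x))).

Lemma poly_unpack P : is_polyhedron P -> PH P /\ exists fs, PD P fs.
Proof.
  intros [Hc [_ [_ [Hci [fs [H1 [H2 [_ [H4 _]]]]]]]]].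
  split. split; auto. exists fs. split; [|split]; auto.
Qed.

Lemma endpoint_seg e v : is_endpoint e v -> seg e v.
Proof.
  intros [H|H]; subst.
  - exists 0. split. lra. symmetry. apply (sp0 (fst e) (snd e)).
  - exists 1. split. lra. symmetry. apply (sp1 (fst e) (snd e)).
Qed.

Lemma poly_plane_in_Pi S P fs i Pi : In P S -> PH P -> PD P fs -> (i < length fs)%nat ->
  polyprop (Fcf fs i) (Fef fs i) Pi -> face_planes S Pi.
Proof.
  intros HPS HPH [PD1 [PD2 PD3]] Hi [HPi [Hsub [Hcl [[w Hw] Hbd]]]].
  assert (Fw : Fcf fs i w) by (destruct Hw; auto).
  assert (Nj : forall j, (j < length fs)%nat -> j <> i -> ~ Fcf fs j w).
  { intros j Hj Hji Fj. destruct (PD3 i j w Hi Hj (not_eq_sym Hji) Fw Fj) as [[e [He [_ Hs]]]|[[e [He Hv]] _]].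
    - assert (exists e, In e (Fef fs i) /\ seg e w) by eauto. apply Hbd in H. tauto.
    - assert (exists e, In e (Fef fs i) /\ seg e w) by (exists e; split; auto; apply endpoint_seg; auto).
      apply Hbd in H. tauto. }
  destruct (fin_min_nat (length fs) (fun j r => j <> i -> forall b, edist w b < r -> ~ Fcf fs j b)) as [r [Hr Hrr]].
  { intros a e1 e2 H [H0 H1] Ha b Hb. apply H; auto. lra. }
  { intros j Hj. destruct (Nat.eq_dec j i) as [->|Hji].
    - exists 1. split. lra. intros H; tauto.
    - destruct (PD1 j Hj) as [Plj Hpj]. pose proof (polygon_prop _ _ (PD1 j Hj)) as [Plj' [_ [_ [Hclj _]]]].
      destruct (Hclj w (Nj j Hj Hji)) as [rj [Hrj Hb]]. exists rj. split; auto. }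
  assert (Bw : boundary P w) by (apply PD2; eauto).
  assert (Hfl : forall b, boundary P b -> edist w b < r -> Pi b).
  { intros b Bb Hb. apply PD2 in Bb. destruct Bb as [j [Hj Fj]].
    destruct (Nat.eq_dec j i) as [->|Hji]. apply Hsub; auto.
    exfalso. apply (Hrr j Hj Hji b Hb Fj). }
  assert (Fw' : flat_point P w).
  { split; auto. exists r. split; auto. exists Pi. split; auto. }
  split; auto. exists P, (closure (component_of (flat_point P) w)). split; auto. split.
  - exists (component_of (flat_point P) w). split. exists w. split; auto. tauto. tauto.
  - intros y Hy. apply plane_closure; auto. eapply closure_mono; [|exact Hy].
    intros k Kk. apply (comp_in_plane P w r Pi); auto.
Qed.

Definition relint_F (Pl F : pset) y := exists rho, 0 < rho /\ forall w, Pl w -> edist y w < rho -> F w.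

Lemma relbd_cut S P fs F Pl y : In P S -> PH P -> PD P fs -> is_face P F -> plane_of F Pl ->
  F y -> ~ relint_F Pl F y -> cut_lines S Pl y.
Proof.
  intros HPS HPH HPD HF [HPl HFs] Fy Hnr.
  assert (By : boundary P y) by (eapply face_in_bd; eauto).
  destruct (face_unfold P F HF) as [x0 [Fx0 EF]].
  destruct (classic (flat_point P y)) as [Fly|Nfy].
  - exfalso. destruct Fly as [_ [e [He [Py [HPy Hfl]]]]].
    rewrite EF in Fy. destruct (Fy (e/2)) as [c [Kc Hc]]. lra.
    assert (Hd := flat_disk_comp P x0 y e Py c HPH By HPy He Hfl Kc Hc).
    assert (Pyy : Py y) by (eapply flat_plane_self; eauto).
    assert (E : forall w, Py w <-> Pl w).
    { apply (disk_lemma Py Pl y (e/2)); auto. lra. intros w Pw Hw. apply HFs. rewrite EF.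
      apply closure_self. apply Hd; auto. }
    apply Hnr. exists (e/2). split. lra. intros w Pw Hw. rewrite EF. apply closure_self.
    apply Hd; auto. apply E; auto.
  - assert (Hnf : forall e, 0 < e -> ~ (forall b, boundary P b -> edist y b < e -> Pl b)).
    { intros e He H. apply Nfy. split; auto. exists e. split; auto. exists Pl; auto. }
    destruct HPD as [PD1 [PD2 PD3]].
    assert (Hex : exists i, (i < length fs)%nat /\ ~ exists r, 0 < r /\ forall b, Fcf fs i b -> edist y b < r -> Pl b).
    { apply NNPP; intro Hn.
      destruct (fin_min_nat (length fs) (fun i r => forall b, Fcf fs i b -> edist y b < r -> Pl b)) as [r [Hr Hrr]].
      { intros a e1 e2 H [H0 H1] b Hb Hd. apply H; auto. lra. }
      { intros i Hi. apply NNPP; intro H2. apply Hn. exists i; auto. }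
      apply (Hnf r Hr). intros b Bb Hb. apply PD2 in Bb. destruct Bb as [j [Hj Fj]].
      apply (Hrr j Hj); auto. }
    destruct Hex as [i [Hi Hni]].
    assert (Hnear : forall r, 0 < r -> exists b, Fcf fs i b /\ edist y b < r /\ ~ Pl b).
    { intros r Hr. apply NNPP; intro H. apply Hni. exists r. split; auto.
      intros b Fb Hb. apply NNPP; intro Hp. apply H. exists b; auto. }
    destruct (polygon_prop _ _ (PD1 i Hi)) as [Pi HPP].
    pose proof HPP as [HPi [Hsub [Hcl _]]].
    assert (Fiy : Fcf fs i y).
    { apply closed_closure; auto. intros r Hr. destruct (Hnear r Hr) as [b [Fb [Hb _]]]. exists b; auto. }
    destruct (Hnear 1) as [b0 [Fb0 [_ Nb0]]]. lra.
    exists Pi. split. apply (poly_plane_in_Pi S P fs i Pi); auto. split; auto. split; [|split; auto].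
    intro Hpar. apply Nb0. apply (proj2 (parallel_common Pl Pi y Hpar (HFs y Fy) (Hsub y Fiy) b0)); auto.
Qed.

Lemma conn_in_face S P fs F Pl (C : pset) : In P S -> PH P -> PD P fs -> is_face P F -> plane_of F Pl ->
  connected C -> subset C Pl -> (forall y, C y -> ~ cut_lines S Pl y) ->
  (exists y0, C y0 /\ relint_F Pl F y0) -> subset C F.
Proof.
  intros HPS HPH HPD HF HPF HC HCP HCc Hy0.
  assert (Fclosed : forall y, closure F y -> F y).
  { destruct (face_unfold P F HF) as [x0 [_ ->]]. intros y Hy. apply closure_idem; auto. }
  set (U := relint_F Pl F). set (V := fun y => ~ F y).
  assert (OU : open_set U).
  { intros u [r [Hr H]]. exists (r/2). split. lra. intros u' Hu'. exists (r/2). split. lra.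
    intros w Pw Hw. apply H; auto. pose proof (edist_tri u u' w). lra. }
  assert (OV : open_set V).
  { intros u Hu. destruct (not_closure F u) as [r [Hr H]]. intro; apply Hu; auto.
    exists r. split; auto. intros y Hy Fy. specialize (H y Fy). lra. }
  assert (Cov : subset C (fun x => U x \/ V x)).
  { intros y Cy. destruct (classic (F y)) as [Fy|Fy]; [|right; auto].
    destruct (classic (U y)) as [Uy|Uy]; [left; auto|].
    exfalso. apply (HCc y Cy). eapply relbd_cut; eauto. }
  assert (Dis : forall x, ~ (C x /\ U x /\ V x)).
  { intros x [Cx [[r [Hr H]] Vx]]. apply Vx. apply H. apply HCP; auto. rewrite edist_refl; auto. }
  intros y Cy. pose proof (conn_side C U V HC OU OV Cov Dis Hy0 y Cy) as [r [Hr H]].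
  apply H. apply HCP; auto. rewrite edist_refl; auto.
Qed.

Lemma avoid (Pl : pset) (Ls : list pset) : is_plane Pl ->
  (forall Q, In Q Ls -> is_plane Q /\ exists q, Pl q /\ ~ Q q) ->
  forall z r, Pl z -> 0 < r -> exists y, Pl y /\ edist z y < r /\ forall Q, In Q Ls -> ~ Q y.
Proof.
  intros HPl. induction Ls as [|Q Ls IH]; intros HL z r Pz Hr.
  - exists z. split; auto. split. rewrite edist_refl; auto. intros Q [].
  - destruct (IH (fun Q' HQ' => HL Q' (or_intror HQ')) z (r/2) Pz) as [y1 [Py1 [Hy1 Hoff]]]. lra.
    destruct (fin_min_list Ls (fun Q' rho => forall w, edist y1 w < rho -> ~ Q' w)) as [rho [Hrho Hrr]].
    { intros a e e' H [H0 H1] w Hw. apply H. lra. }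
    { intros Q' HQ'. destruct (HL Q' (or_intror HQ')) as [HQp _].
      destruct (plane_closed Q' y1 HQp (Hoff Q' HQ')) as [r' [Hr' Hb]]. exists r'; auto. }
    destruct (HL Q (or_introl eq_refl)) as [HQ [q [Pq Nq]]].
    assert (Hex : exists y, Pl y /\ edist y1 y < Rmin rho (r/2) /\ ~ Q y).
    { apply NNPP; intro Hn.
      assert (E : forall y, Pl y <-> Q y).
      { apply (disk_lemma Pl Q y1 (Rmin rho (r/2))); auto. apply Rmin_pos; lra.
        intros y Py Hy. apply NNPP; intro Qy. apply Hn. exists y; auto. }
      apply Nq. apply E; auto. }
    destruct Hex as [y [Py [Hy Qy]]].
    pose proof (Rmin_l rho (r/2)). pose proof (Rmin_r rho (r/2)).
    exists y. split; auto. split. pose proof (edist_tri z y1 y). lra.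
    intros Q' [<-|HQ']; auto. apply (Hrr Q' HQ'). lra.
Qed.

Lemma gather (n : nat) (Phi : nat -> pset -> Prop) :
  (forall i, (i < n)%nat -> exists Q, Phi i Q) ->
  exists l, (forall Q, In Q l -> exists i, (i < n)%nat /\ Phi i Q) /\
            (forall i, (i < n)%nat -> exists Q, In Q l /\ Phi i Q).
Proof.
  induction n as [|n IH]; intros H.
  - exists nil. split. intros Q []. intros i Hi; lia.
  - destruct IH as [l [H1 H2]]. intros i Hi; apply H; lia.
    destruct (H n (Nat.lt_succ_diag_r n)) as [Qn HQn].
    exists (Qn :: l). split.
    + intros Q [<-|HQ]. exists n; split; auto. destruct (H1 Q HQ) as [i [Hi Hp]]. exists i; split; auto.
    + intros i Hi. destruct (Nat.eq_dec i n) as [->|Hin]. exists Qn; split; auto. left; auto.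
      destruct (H2 i) as [Q [HQ Hp]]. lia. exists Q; split; auto. right; auto.
Qed.

Lemma Pi_poly S P : In P S -> is_polyhedron P ->
  exists LP : list pset, (forall Q, In Q LP -> face_planes S Q) /\
     (forall Q F, is_face P F -> plane_of F Q -> In Q LP).
Proof.
  intros HPS HP. destruct (poly_unpack P HP) as [HPH [fs HPD]].
  pose proof HPD as [PD1 [PD2 PD3]].
  destruct (gather (length fs) (fun i Q => polyprop (Fcf fs i) (Fef fs i) Q)) as [LP [H1 H2]].
  { intros i Hi. apply polygon_prop; auto. }
  exists LP. split.
  - intros Q HQ. destruct (H1 Q HQ) as [i [Hi Hp]]. eapply poly_plane_in_Pi; eauto.
  - intros Q F HF [HQ HFQ].
    destruct (face_disk P F HPH HF) as [z [Pz [rho [HPz [Hr [Pzz Hd]]]]]].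
    assert (E : forall y, Pz y <-> Q y).
    { apply (disk_lemma Pz Q z rho); auto. }
    apply NNPP; intro Hn.
    destruct (avoid Q LP HQ) with (z := z) (r := rho) as [y [Qy [Hy Hoff]]]; auto.
    + intros Q' HQ'. destruct (H1 Q' HQ') as [i [Hi [HQ'p _]]]. split; auto.
      apply NNPP; intro Hn2. apply Hn.
      assert (Q = Q').
      { apply pext. apply plane_subset_eq; auto. intros x Qx. apply NNPP; intro Hx. apply Hn2. exists x; auto. }
      subst; auto.
    + apply E; auto.
    + assert (By : boundary P y). { eapply face_in_bd; eauto. apply Hd; auto. apply E; auto. }
      apply PD2 in By. destruct By as [i [Hi Fi]].
      destruct (H2 i Hi) as [Qi [HQi [_ [Hs _]]]]. apply (Hoff Qi HQi). apply Hs; auto.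
Qed.

Lemma Pi_finite S : (forall P, In P S -> is_polyhedron P) ->
  exists L, (forall Q, In Q L -> face_planes S Q) /\ (forall Q, face_planes S Q -> In Q L).
Proof.
  intros HS.
  assert (G : forall S', (forall P, In P S' -> In P S) -> exists L, (forall Q, In Q L -> face_planes S Q) /\
     (forall Q P F, In P S' -> is_face P F -> plane_of F Q -> In Q L)).
  { induction S' as [|P S' IH]; intros Hsub.
    - exists nil. split. intros Q []. intros Q P F [].
    - destruct IH as [L1 [A1 B1]]. intros; apply Hsub; right; auto.
      destruct (Pi_poly S P) as [LP [A2 B2]]. apply Hsub; left; auto. apply HS, Hsub; left; auto.
      exists (LP ++ L1). split.
      + intros Q HQ. apply in_app_or in HQ. destruct HQ; auto.
      + intros Q P' F [<-|HP'] HF HQ; apply in_or_app; [left|right]; eauto. }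
  destruct (G S) as [L [A B]]; auto. exists L. split; auto.
  intros Q [HQ [P [F [HPS [HF HFQ]]]]]. eapply B; eauto. split; auto.
Qed.

Definition offall (Ls : list (R3*R)) y := forall nc, In nc Ls -> dot (fst nc) y <> snd nc.
Definition samereg (Ls : list (R3*R)) y0 y := forall nc, In nc Ls ->
  0 < (dot (fst nc) y0 - snd nc) * (dot (fst nc) y - snd nc).
Definition EP (Pl : pset) Ls eps := forall y0, Pl y0 -> offall Ls y0 ->
  exists c, Pl c /\ forall y, Pl y -> edist c y < eps -> samereg Ls y0 y.
Definition LS1 S (Pl : pset) Ls := forall y, cut_lines S Pl y -> exists nc, In nc Ls /\ dot (fst nc) y = snd nc.
Definition LS2 (Pl : pset) (Ls : list (R3*R)) := forall nc, In nc Ls -> fst nc <> vzero /\ exists q, Pl q /\ dot (fst nc) q <> snd nc.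

Lemma sign_prod a b : a <> 0 -> Rabs (b - a) < Rabs a -> 0 < a * b.
Proof.
  intros Ha H. pose proof (Rle_abs (b - a)). pose proof (Rle_abs (-(b - a))). rewrite Rabs_Ropp in H1.
  destruct (Rlt_le_dec 0 a).
  - rewrite (Rabs_right a) in H by lra. apply Rmult_lt_0_compat; lra.
  - rewrite (Rabs_left a) in H by lra.
    assert (0 < (-a) * (-b)) by (apply Rmult_lt_0_compat; lra).
    replace (a * b) with ((-a) * (-b)) by ring. auto.
Qed.

Lemma samereg_open Ls y0 : offall Ls y0 -> exists rho, 0 < rho /\ forall y, edist y0 y < rho -> samereg Ls y0 y.
Proof.
  intros Hoff.
  destruct (fin_min_list Ls (fun nc rho => forall y, edist y0 y < rho -> 0 < (dot (fst nc) y0 - snd nc) * (dot (fst nc) y - snd nc))) as [r [Hr H]].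
  { intros a e e' H [H0 H1] y Hy. apply H. lra. }
  { intros [n c] Hnc. simpl. specialize (Hoff _ Hnc). simpl in Hoff.
    pose proof (norm_nonneg n).
    exists (Rabs (dot n y0 - c) / (norm n + 1)). split.
    { apply Rdiv_lt_0_compat. apply Rabs_pos_lt. lra. lra. }
    intros y Hy. apply sign_prod. lra.
    pose proof (dot_lip n y0 y). rewrite Rabs_minus_sym in H0.
    replace (dot n y - c - (dot n y0 - c)) with (dot n y - dot n y0) by ring.
    assert (norm n * edist y0 y <= (norm n + 1) * edist y0 y).
    { pose proof (edist_nonneg y0 y). nra. }
    assert ((norm n + 1) * edist y0 y < Rabs (dot n y0 - c)).
    { apply (Rmult_lt_compat_l (norm n + 1)) in Hy. 2: lra.
      field_simplify in Hy. lra. lra. }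
    lra. }
  exists r; split; auto. intros y Hy nc Hnc. apply H; auto.
Qed.

Lemma sr_comb a0 a1 a : 0 < a1 * a0 -> 0 < a1 * a -> 0 < a0 * a.
Proof.
  intros H1 H2. destruct (Rlt_le_dec 0 a1).
  - assert (0 < a0) by (destruct (Rlt_le_dec 0 a0); auto; nra).
    assert (0 < a) by (destruct (Rlt_le_dec 0 a); auto; nra). nra.
  - assert (a1 <> 0) by (intro; subst; lra).
    assert (a1 < 0) by lra.
    assert (a0 < 0) by (destruct (Rlt_le_dec a0 0); auto; nra).
    assert (a < 0) by (destruct (Rlt_le_dec a 0); auto; nra). nra.
Qed.

Definition sgn (Ls : list (R3*R)) y : list bool :=
  map (fun nc => if Rlt_dec (snd nc) (dot (fst nc) y) then true else false) Ls.

Lemma signs_samereg Ls y0 y : offall Ls y0 -> offall Ls y -> sgn Ls y0 = sgn Ls y -> samereg Ls y0 y.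
Proof.
  induction Ls as [|[n c] Ls IH]; intros H0 H1 Hs.
  - intros nc [].
  - simpl in Hs. injection Hs as Hh Ht.
    intros nc [<-|Hnc].
    + simpl. specialize (H0 (n,c) (or_introl eq_refl)). specialize (H1 (n,c) (or_introl eq_refl)). simpl in *.
      destruct (Rlt_dec c (dot n y0)); destruct (Rlt_dec c (dot n y)); try discriminate.
      * apply Rmult_lt_0_compat; lra.
      * assert (0 < (c - dot n y0) * (c - dot n y)) by (apply Rmult_lt_0_compat; lra). nra.
    + apply IH; auto. intros nc' H; apply H0; right; auto. intros nc' H; apply H1; right; auto.
Qed.

Fixpoint allbools (n : nat) : list (list bool) :=
  match n with
  | O => nil :: nil
  | S n => map (cons true) (allbools n) ++ map (cons false) (allbools n)
  end.

Lemma allbools_in (l : list bool) : In l (allbools (length l)).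
Proof.
  induction l as [|b l IH]; simpl. left; auto.
  apply in_or_app. destruct b; [left|right]; apply in_map; auto.
Qed.

Lemma sgn_in Ls y : In (sgn Ls y) (allbools (length Ls)).
Proof.
  replace (length Ls) with (length (sgn Ls y)). apply allbools_in.
  unfold sgn. apply length_map.
Qed.

Lemma EPS1 (Pl : pset) Ls : exists eps, 0 < eps /\ EP Pl Ls eps.
Proof.
  destruct (fin_min_list (allbools (length Ls)) (fun sg e => forall y0, Pl y0 -> offall Ls y0 -> sgn Ls y0 = sg ->
      exists c, Pl c /\ forall y, Pl y -> edist c y < e -> samereg Ls y0 y)) as [eps [He H]].
  { intros a e e' H [H0 H1] y0 P0 O0 S0. destruct (H y0 P0 O0 S0) as [c [Pc Hc]]. exists c; split; auto.
    intros y Py Hy. apply Hc; auto. lra. }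
  { intros sg _. destruct (classic (exists y1, Pl y1 /\ offall Ls y1 /\ sgn Ls y1 = sg)) as [[y1 [P1 [O1 S1]]]|Hn].
    - destruct (samereg_open Ls y1 O1) as [r [Hr Hrr]]. exists r. split; auto.
      intros y0 P0 O0 S0. exists y1. split; auto. intros y Py Hy nc Hnc.
      assert (A := signs_samereg Ls y1 y0 O1 O0 (eq_trans S1 (eq_sym S0)) nc Hnc).
      assert (B := Hrr y Hy nc Hnc).
      eapply sr_comb; eauto.
    - exists 1. split. lra. intros y0 P0 O0 S0. exfalso. apply Hn. exists y0; auto. }
  exists eps. split; auto. intros y0 P0 O0. apply (H (sgn Ls y0)); auto. apply sgn_in.
Qed.

Lemma region_convex (Pl : pset) Ls y0 : is_plane Pl -> convex (fun y => Pl y /\ samereg Ls y0 y).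
Proof.
  intros HP. apply convex_inter. apply convex_plane; auto.
  intros a b t Ha Hb Ht nc Hnc. specialize (Ha nc Hnc). specialize (Hb nc Hnc).
  rewrite dot_sp.
  set (a0 := dot (fst nc) y0 - snd nc) in *.
  replace (a0 * (dot (fst nc) a + t * (dot (fst nc) b - dot (fst nc) a) - snd nc)) with
    (a0 * (dot (fst nc) a - snd nc) + t * (a0 * (dot (fst nc) b - snd nc) - a0 * (dot (fst nc) a - snd nc))) by ring.
  apply cvx_gt; auto.
Qed.

Lemma region_nocut S (Pl : pset) Ls y0 y : LS1 S Pl Ls -> samereg Ls y0 y -> ~ cut_lines S Pl y.
Proof.
  intros H1 Hs Hc. destruct (H1 y Hc) as [nc [Hnc E]]. specialize (Hs nc Hnc). rewrite E in Hs. lra.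
Qed.

Lemma region_closure Ls (G : pset) x : (forall y, G y -> offall Ls y) -> closure G x ->
  exists y0, G y0 /\ closure (fun y => G y /\ samereg Ls y0 y) x.
Proof.
  intros HG Hc.
  destruct (closure_union (allbools (length Ls)) (fun sg y => G y /\ sgn Ls y = sg) x) as [sg [_ Hsg]].
  { eapply closure_mono; [|exact Hc]. intros y Gy. exists (sgn Ls y). split; auto. apply sgn_in. }
  destruct (Hsg 1) as [y0 [[G0 S0] _]]. lra.
  exists y0. split; auto. eapply closure_mono; [|exact Hsg].
  intros y [Gy Sy]. split; auto. apply signs_samereg; auto. congruence.
Qed.

Lemma LS_exists S (Pl : pset) L : is_plane Pl -> (forall Q, face_planes S Q -> In Q L) ->
  exists Ls, LS1 S Pl Ls /\ LS2 Pl Ls.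
Proof.
  intros HPl HL.
  assert (G : forall L0, exists Ls, (forall Q, In Q L0 -> is_plane Q -> ~ parallel Pl Q ->
      exists nc, In nc Ls /\ forall x, Q x <-> dot (fst nc) x = snd nc) /\ LS2 Pl Ls).
  { induction L0 as [|Q L0 IH].
    - exists nil. split. intros Q []. intros nc [].
    - destruct IH as [Ls [A B]].
      destruct (classic (is_plane Q /\ ~ parallel Pl Q)) as [[HQ Np]|Hn].
      + pose proof HQ as [n [c [Hn HQe]]]. exists ((n,c) :: Ls). split.
        * intros Q' [<-|HQ'] HQ'p Np'. exists (n,c). split; auto. left; auto.
          destruct (A Q' HQ' HQ'p Np') as [nc [Hnc E]]. exists nc; split; auto. right; auto.
        * intros nc [<-|Hnc]; auto. simpl. split; auto. apply plane_rep_ne; auto.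
          intro Hs. apply Np. assert (Pl = Q).
          { apply pext. apply plane_subset_eq; auto. intros x Px. apply HQe; auto. }
          subst. apply parallel_refl; auto.
      + exists Ls. split; auto. intros Q' [<-|HQ'] HQ'p Np'. exfalso; apply Hn; auto. apply A; auto. }
  destruct (G L) as [Ls [A B]]. exists Ls. split; auto.
  intros y [Q [HQ [Np [Py Qy]]]]. destruct (A Q (HL Q HQ) (proj1 HQ) Np) as [nc [Hnc E]].
  exists nc; split; auto. apply E; auto.
Qed.

Lemma EPS_global S L : (forall Q, In Q L -> face_planes S Q) -> (forall Q, face_planes S Q -> In Q L) ->
  exists eps, 0 < eps /\ forall Pl, In Pl L -> exists Ls, LS1 S Pl Ls /\ LS2 Pl Ls /\ EP Pl Ls eps.
Proof.
  intros HA HB.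
  apply (fin_min_list L (fun Pl eps => exists Ls, LS1 S Pl Ls /\ LS2 Pl Ls /\ EP Pl Ls eps)).
  - intros Pl e e' [Ls [A [B C]]] [H0 H1]. exists Ls. split; auto. split; auto.
    intros y0 P0 O0. destruct (C y0 P0 O0) as [c [Pc Hc]]. exists c; split; auto.
    intros y Py Hy. apply Hc; auto. lra.
  - intros Pl HPl. destruct (HA Pl HPl) as [HP _].
    destruct (LS_exists S Pl L HP HB) as [Ls [A B]].
    destruct (EPS1 Pl Ls) as [eps [He C]]. exists eps. split; auto. exists Ls; auto.
Qed.

Lemma marker_bound (M : list marker) : exists B, forall p Pl, In (p, Pl) M -> norm p <= B.
Proof.
  induction M as [|[q Q] M [B HB]].
  - exists 0. intros p Pl [].
  - exists (Rmax (norm q) B). intros p Pl [E|H].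
    + injection E as -> ->. apply Rmax_l.
    + eapply Rle_trans. eapply HB; eauto. apply Rmax_r.
Qed.

Lemma face_closed P F x : is_face P F -> closure F x -> F x.
Proof. intros HF H. destruct (face_unfold P F HF) as [x0 [_ ->]]. apply closure_idem; auto. Qed.

Theorem mainTheorem2 (S : list pset) (HS : forall P, In P S -> is_polyhedron P) :
  exists eps, 0 < eps /\
  forall M : list marker,
    (forall p Pl, In (p, Pl) M ->
       exists P F, In P S /\ is_face P F /\ F p /\ plane_of F Pl) ->
    (forall P F x, In P S -> is_face P F -> F x ->
       exists p Pl, In (p, Pl) M /\ F p /\ plane_of F Pl /\ edist x p < eps) ->
    ((forall p Pl, In (p, Pl) M -> face_planes S Pl) /\
     (forall Pl, face_planes S Pl ->
        exists p Pl', In (p, Pl') M /\ forall y, Pl' y <-> Pl y)) /\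
    (forall x,
       (exists P F, In P S /\ is_face P F /\ F x) <->
       (exists p Pl C, In (p, Pl) M /\ face_planes S Pl /\ is_cell S Pl C /\
          bounded_set C /\ C p /\ closure C x)).
Proof.
  destruct (Pi_finite S HS) as [L [LA LB]].
  destruct (EPS_global S L LA LB) as [eps [He Heps]].
  exists eps. split; auto. intros M H1 H2.
  split; [split|].
  - intros p Pl Hm. destruct (H1 p Pl Hm) as [P [F [HPS [HF [Fp [HPl HFs]]]]]].
    split; auto. exists P, F; auto.
  - intros Pl [HPl [P [F [HPS [HF HFs]]]]].
    destruct (poly_unpack P (HS P HPS)) as [HPH _].
    destruct (face_nonempty P F HF) as [x Fx].
    destruct (H2 P F x HPS HF Fx) as [p [Pl' [Hm [Fp [HP' Hd]]]]].
    assert (Pl' = Pl) by (eapply face_plane_unique; eauto; split; auto).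
    subst. exists p, Pl. split; auto. tauto.
  - intro x. split.
    + intros [P [F [HPS [HF Fx]]]].
      destruct (poly_unpack P (HS P HPS)) as [HPH [fs HPD]].
      destruct (H2 P F x HPS HF Fx) as [p0 [Pl [_ [_ [[HPl HFs] _]]]]].
      assert (HPi : face_planes S Pl) by (split; auto; exists P, F; auto).
      destruct (Heps Pl (LB Pl HPi)) as [Ls [L1 [L2 EPl]]].
      destruct (face_unfold P F HF) as [x0 [Fx0 EF]].
      set (K := component_of (flat_point P) x0) in *.
      set (G := fun y => Pl y /\ offall Ls y /\ relint_F Pl F y).
      assert (HG : closure G x).
      { intros d Hd. rewrite EF in Fx. destruct (Fx (d/2)) as [z [Kz Hz]]. lra.
        destruct (comp_disk P x0 Pl z HPH HPl) as [rho [Hrho Hdisk]]; auto.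
        intros w Hw; apply HFs; rewrite EF; exact Hw.
        destruct (avoid Pl (map (fun nc => fun y => dot (fst nc) y = snd nc) Ls) HPl) with (z := z) (r := Rmin (rho/2) (d/2))
          as [y [Py [Hy Hoff]]].
        - intros Q HQ. apply in_map_iff in HQ. destruct HQ as [nc [<- Hnc]].
          destruct (L2 nc Hnc) as [Hn [q [Pq Nq]]]. split. exists (fst nc), (snd nc). split; auto. tauto.
          exists q; auto.
        - apply HFs. rewrite EF. apply closure_self; auto.
        - apply Rmin_pos; lra.
        - pose proof (Rmin_l (rho/2) (d/2)). pose proof (Rmin_r (rho/2) (d/2)).
          exists y. split.
          + split; auto. split.
            * intros nc Hnc E. apply (Hoff (fun y => dot (fst nc) y = snd nc)); auto.
              apply in_map_iff. exists nc; auto.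
            * exists (rho/2). split. lra. intros w Pw Hw. rewrite EF. apply closure_self.
              apply Hdisk; auto. pose proof (edist_tri z y w). lra.
          + pose proof (edist_tri x z y). lra. }
      destruct (region_closure Ls G x) as [y0 [[P0 [O0 R0]] Hcl]]; auto.
      { intros y [_ [O _]]; auto. }
      set (A := fun y => Pl y /\ ~ cut_lines S Pl y).
      set (C := component_of A y0).
      set (Rg := fun y => Pl y /\ samereg Ls y0 y).
      assert (RgA : subset Rg A).
      { intros y [Py Sy]. split; auto. eapply region_nocut; eauto. }
      assert (Rg0 : Rg y0). { split; auto. apply signs_samereg; auto. }
      assert (RgC : subset Rg C).
      { intros y Ry. exists Rg. split. apply convex_connected, region_convex; auto. split; auto. }
      assert (CF : subset C F).
      { apply (conn_in_face S P fs F Pl C); auto.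
        - split; auto.
        - apply comp_connected.
        - intros y Cy. apply comp_sub in Cy. destruct Cy; auto.
        - intros y Cy. apply comp_sub in Cy. destruct Cy; auto.
        - exists y0. split; auto. }
      destruct (EPl y0 P0 O0) as [c [Pc Hc]].
      assert (Rc : Rg c). { split; auto. apply Hc; auto. rewrite edist_refl; auto. }
      destruct (H2 P F c HPS HF (CF c (RgC c Rc))) as [p [Pl' [Hm [Fp [HP' Hd]]]]].
      assert (Pl' = Pl) by (eapply face_plane_unique; eauto; split; auto). subst Pl'.
      exists p, Pl, C. split; auto. split; auto. split.
      { exists y0. split. apply RgA; auto. tauto. }
      split.
      { destruct (marker_bound M) as [B HB]. exists (B + eps). intros y Cy.
        destruct (H2 P F y HPS HF (CF y Cy)) as [q [Q [Hq [_ [_ Hyq]]]]].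
        specialize (HB q Q Hq). replace y with (vadd q (vsub y q)).
        eapply Rle_trans. apply norm_triangle. unfold edist in Hyq. lra.
        vd; vs; f_equal; [f_equal|]; ring. }
      split.
      { apply RgC. split. apply HFs; auto. apply Hc; auto. }
      eapply closure_mono; [|exact Hcl]. intros y [[Py _] Sy]. apply RgC. split; auto.
    + intros [p [Pl [C [Hm [HPi [Hcell [Hb [Cp Hx]]]]]]]].
      destruct (H1 p Pl Hm) as [P [F [HPS [HF [Fp [HPl HFs]]]]]].
      destruct (poly_unpack P (HS P HPS)) as [HPH [fs HPD]].
      destruct Hcell as [y1 [A1 HC]].
      assert (EC : C = component_of (fun y => Pl y /\ ~ cut_lines S Pl y) y1) by (apply pext; auto).
      assert (CA : forall y, C y -> Pl y /\ ~ cut_lines S Pl y).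
      { intros y Cy. rewrite EC in Cy. apply comp_sub in Cy; auto. }
      assert (CF : subset C F).
      { apply (conn_in_face S P fs F Pl C); auto.
        - split; auto.
        - rewrite EC. apply comp_connected.
        - intros y Cy; apply CA; auto.
        - intros y Cy; apply CA; auto.
        - exists p. split; auto. apply NNPP; intro Hn.
          apply (proj2 (CA p Cp)). eapply relbd_cut; eauto. split; auto. }
      exists P, F. split; auto. split; auto. apply (face_closed P F x HF).
      eapply closure_mono; eauto.
Qed.
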